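(* Let $r>0$, $T>0$, let $\sigma_1$ be a nonnegative random variable with $P\{\sigma_1>x\}=L(x)/x^{\alpha}$, where $\alpha>0$ and $L$ is continuous, slowly varying, with $\lim_{x\to\infty}L(x)=\infty$. Let $V$ be uniformly distributed on $(0,T]$ and independent of $\sigma_1$, and let $F_T(x)=P\{e^{-rV}\sigma_1\le x\}$. Then $F_T$ has a regularly varying tail. *)

(* Defs.v *)
From HB Require Import structures.
From mathcomp Require Import all_boot all_order all_algebra.
From mathcomp Require Import all_classical all_reals all_analysis.
Set Implicit Arguments. Unset Strict Implicit. Unset Printing Implicit Defensive.
Import Order.TTheory GRing.Theory Num.Theory.
Import numFieldNormedType.Exports.
Local Open Scope classical_set_scope.
Local Open Scope ring_scope.

Definition slowly_varying (R : realType) (L : R -> R) : Prop :=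
  (\forall x \near +oo, 0 < L x) /\
  forall t : R, 0 < t -> (fun x => L (t * x) / L x) @ +oo --> (1 : R).

Definition regularly_varying (R : realType) (f : R -> R) (rho : R) : Prop :=
  (\forall x \near +oo, 0 < f x) /\
  forall t : R, 0 < t -> (fun x => f (t * x) / f x) @ +oo --> t `^ rho.

Definition has_regularly_varying_tail (R : realType) (F : R -> R) : Prop :=
  exists rho : R, regularly_varying (fun x => 1 - F x) rho.

(* Main.v *)
Require Import Defs.
From HB Require Import structures.
From mathcomp Require Import all_boot all_order all_algebra.
From mathcomp Require Import all_classical all_reals all_analysis.
From mathcomp Require Import ring lra.
Import Order.TTheory GRing.Theory Num.Theory.
Import numFieldNormedType.Exports.
Local Open Scope classical_set_scope.
Local Open Scope ring_scope.

Lemma ratio_bounds (R : realType) (g : R -> R) (s l eta : R) :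
  0 < l -> 1 < eta -> (\forall y \near +oo, 0 < g y) ->
  (fun y => g (s * y) / g y) @ +oo --> l ->
  \forall y \near +oo, g (s * y) <= eta * l * g y /\ l * g y <= eta * g (s * y).
Proof.
move=> l0 eta1 gpos hc.
have ei0 : 0 < eta^-1 by rewrite invr_gt0; lra.
have eei : eta * eta^-1 = 1 by rewrite divff // gt_eqF //; lra.
have ei1 : eta^-1 < 1 by rewrite invf_lt1 //; lra.
have eps0 : 0 < l * (1 - eta^-1) by apply: mulr_gt0 => //; lra.
have H := (cvgrPdist_le _ _).1 hc _ eps0.
near=> y.
have gy : 0 < g y by near: y; exact: gpos.
have : `|l - g (s * y) / g y| <= l * (1 - eta^-1) by near: y; exact: H.
rewrite ler_norml => /andP[h1 h2].
set q := g (s * y) / g y in h1 h2.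
have -> : g (s * y) = q * g y by rewrite /q divfK // gt_eqF.
have hq1 : q <= eta * l.
  have : 2 <= eta + eta^-1 by nra.
  nra.
have hq2 : l <= eta * q by nra.
split; nra.
Unshelve. all: by end_near.
Qed.

Lemma piece_real (R : realFieldType) (Gy Gcy Gty Gtcy p Px Ptx tau gam eta : R) :
  0 <= p -> 0 <= Gy -> 0 <= Gcy -> 0 <= Gty -> 0 <= Gtcy -> 0 <= Px -> 0 <= Ptx ->
  0 < tau -> 0 < gam -> gam <= eta -> 1 < eta ->
  Ptx <= Gty * p -> Gtcy * p <= Ptx -> Px <= Gy * p -> Gcy * p <= Px ->
  Gty <= eta * tau * Gy -> tau * Gcy <= eta * Gtcy -> Gy <= eta * gam * Gcy ->
  Ptx <= eta * eta * eta * tau * Px /\ tau * Px <= eta * eta * eta * Ptx.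
Proof.
move=> p0 Gy0 Gcy0 Gty0 Gtcy0 Px0 Ptx0 tau0 gam0 ge e1 h1 h2 h3 h4 h5 h6 h7.
have et0 : 0 <= eta * tau by apply: mulr_ge0; lra.
have eg0 : 0 <= eta * gam by apply: mulr_ge0; lra.
split.
- have a1 : Gty * p <= eta * tau * Gy * p by apply: ler_wpM2r.
  have a2 : Gy * p <= eta * gam * Gcy * p by apply: ler_wpM2r.
  have b1 : eta * tau * (Gy * p) <= eta * tau * (eta * gam * Gcy * p) by apply: ler_wpM2l.
  have b2 : eta * tau * (eta * gam) * (Gcy * p) <= eta * tau * (eta * gam) * Px.
    by apply: ler_wpM2l => //; apply: mulr_ge0.
  have b3 : gam * (eta * tau * eta * Px) <= eta * (eta * tau * eta * Px).
    by apply: ler_wpM2r => //; apply: mulr_ge0 => //; apply: mulr_ge0 => //; lra.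
  lra.
- have a1 : tau * Px <= tau * (Gy * p) by apply: ler_wpM2l => //; lra.
  have a2 : tau * (Gy * p) <= tau * (eta * gam * Gcy * p).
    by apply: ler_wpM2l; [lra| apply: ler_wpM2r].
  have a3 : eta * gam * (tau * Gcy * p) <= eta * gam * (eta * Gtcy * p).
    by apply: ler_wpM2l => //; apply: ler_wpM2r.
  have a4 : eta * gam * eta * (Gtcy * p) <= eta * gam * eta * Ptx.
    by apply: ler_wpM2l => //; apply: mulr_ge0 => //; lra.
  have b3 : gam * (eta * eta * Ptx) <= eta * (eta * eta * Ptx).
    by apply: ler_wpM2r => //; apply: mulr_ge0 => //; apply: mulr_ge0; lra.
  lra.
Qed.

Section S.
Variables (R : realType) (d : measure_display) (Omega : measurableType d)
  (P : probability Omega R) (r T : R) (sigma1 V : Omega -> R).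
Hypotheses (hr : 0 < r) (hT : 0 < T)
  (msigma : measurable_fun setT sigma1) (mV : measurable_fun setT V)
  (sigma_nonneg : forall w, 0 <= sigma1 w)
  (V_unif : forall A : set R, measurable A ->
     P (V @^-1` A) =
       mule (T^-1)%:E (lebesgue_measure (A `&` `]0, T])))
  (indep : forall A B : set R, measurable A -> measurable B ->
     P (sigma1 @^-1` A `&` V @^-1` B) =
       (P (sigma1 @^-1` A) * P (V @^-1` B))%E).

Definition E x := [set w | x < expR (- r * V w) * sigma1 w].
Definition Phi x a b := fine (P (E x `&` V @^-1` `]a, b])).
Definition G y := fine (P [set w | sigma1 w > y]).
Definition pV a b := fine (P (V @^-1` `]a, b])).

Lemma Pfin A : measurable A -> P A = (fine (P A))%:E.
Proof. by move=> mA; rewrite fineK // fin_num_measure. Qed.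

Lemma fine_ge0P A : 0 <= fine (P A).
Proof. by apply: fine_ge0; apply: measure_ge0. Qed.

Lemma mE x : measurable (E x).
Proof.
have mh : measurable_fun setT (fun w => expR (- r * V w) * sigma1 w).
  apply: measurable_realfun.measurable_funM => //.
  apply: measurableT_comp; first exact: measurable_realfun.measurable_expR.
  apply: measurable_realfun.measurable_funM => //.
have := mh measurableT _ (measurable_itv `]x, +oo[).
rewrite setTI; congr measurable; apply/seteqP; split => w /=;
  by rewrite in_itv /= andbT.
Qed.

Lemma mVi a b : measurable (V @^-1` `]a, b]).
Proof. by have := mV measurableT _ (measurable_itv `]a, b]); rewrite setTI. Qed.

Lemma sig_set y : [set w | sigma1 w > y] = sigma1 @^-1` `]y, +oo[.
Proof. by apply/seteqP; split => w /=; rewrite in_itv /= andbT. Qed.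

Lemma mS y : measurable [set w | sigma1 w > y].
Proof.
by rewrite sig_set; have := msigma measurableT _ (measurable_itv `]y, +oo[); rewrite setTI.
Qed.

Lemma mEV x a b : measurable (E x `&` V @^-1` `]a, b]).
Proof. exact: measurableI (mE x) (mVi a b). Qed.

Lemma rect y a b : fine (P (sigma1 @^-1` `]y, +oo[ `&` V @^-1` `]a, b])) = G y * pV a b.
Proof.
rewrite indep // -sig_set (Pfin _ (mS y)) (Pfin _ (mVi a b)) -EFinM /=.
done.
Qed.

Lemma mrect y a b : measurable (sigma1 @^-1` `]y, +oo[ `&` V @^-1` `]a, b]).
Proof. by apply: measurableI; [rewrite -sig_set; exact: mS | exact: mVi]. Qed.

Lemma piece_up x a b : 0 <= a -> Phi x a b <= G (x * expR (r * a)) * pV a b.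
Proof.
move=> a0.
have sub : E x `&` V @^-1` `]a, b] `<=`
    sigma1 @^-1` `]x * expR (r * a), +oo[ `&` V @^-1` `]a, b].
  move=> w [/= hx hV]; split => //=.
  move: hV; rewrite /= in_itv /= => /andP[ha hb].
  rewrite in_itv /= andbT.
  have e1 : expR (- r * V w) * expR (r * a) <= 1.
    rewrite -expRD -expR0 ler_expR; have : 0 < r * (V w - a) by apply: mulr_gt0 => //; rewrite subr_gt0.
    lra.
  have ea : 0 < expR (r * a) := expR_gt0 _.
  have ev : 0 < expR (- r * V w) := expR_gt0 _.
  have h1 : x * expR (r * a) < expR (- r * V w) * sigma1 w * expR (r * a).
    by rewrite ltr_pM2r.
  have h2 : expR (- r * V w) * expR (r * a) * sigma1 w <= sigma1 w.
    by apply: ler_piMl => //.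
  lra.
have := le_measure P (mem_set (mEV x a b)) (mem_set (mrect _ a b)) sub.
move=> h; rewrite -rect /Phi; apply: fine_le; [apply: fin_num_measure; exact: mEV| apply: fin_num_measure; exact: mrect|exact: h].
Qed.

Lemma piece_lo x a b : 0 < x -> Phi x a b >= G (x * expR (r * b)) * pV a b.
Proof.
move=> x0.
have sub : sigma1 @^-1` `]x * expR (r * b), +oo[ `&` V @^-1` `]a, b] `<=`
    E x `&` V @^-1` `]a, b].
  move=> w [/= hx hV]; split => //=.
  move: hV; rewrite /= in_itv /= => /andP[ha hb].
  move: hx; rewrite in_itv /= andbT => hx.
  have e1 : 1 <= expR (- r * V w) * expR (r * b).
    rewrite -expRD -expR0 ler_expR.
    have : 0 <= r * (b - V w) by apply: mulr_ge0; [exact: ltW|rewrite subr_ge0].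
    lra.
  have eb : 0 < expR (r * b) := expR_gt0 _.
  have ev : 0 < expR (- r * V w) := expR_gt0 _.
  have h1 : x * expR (r * b) * expR (- r * V w) < sigma1 w * expR (- r * V w).
    by rewrite ltr_pM2r.
  have h2 : x <= x * (expR (- r * V w) * expR (r * b)) by apply: ler_peMr => //; lra.
  rewrite /E /=; lra.
have := le_measure P (mem_set (mrect _ a b)) (mem_set (mEV x a b)) sub.
move=> h; rewrite -rect /Phi; apply: fine_le; [apply: fin_num_measure; exact: mrect| apply: fin_num_measure; exact: mEV|exact: h].
Qed.

Lemma Phi_add x a b c : a <= b -> b <= c -> Phi x a c = Phi x a b + Phi x b c.
Proof.
move=> ab bc.
have eq : E x `&` V @^-1` `]a, c] =
   (E x `&` V @^-1` `]a, b]) `|` (E x `&` V @^-1` `]b, c]).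
  apply/seteqP; split => w /=; rewrite !in_itv /=.
    move=> [hx /andP[h1 h2]]; case: (leP (V w) b) => hb.
      by left; split => //; apply/andP.
    by right; split => //; apply/andP.
  by case=> [][hx /andP[h1 h2]]; split => //; apply/andP; split => //; lra.
have dis : (E x `&` V @^-1` `]a, b]) `&` (E x `&` V @^-1` `]b, c]) = set0.
  apply/seteqP; split => w //=; rewrite !in_itv /=.
  move=> [[_ /andP[_ h1]] [_ /andP[h2 _]]]; lra.
have := measureU P (mEV x a b) (mEV x b c) dis.
move=> h; rewrite /Phi eq h fineD //; apply: fin_num_measure; exact: mEV.
Qed.

Lemma Phi_ge0 x a b : 0 <= Phi x a b.
Proof. exact: fine_ge0P. Qed.
Lemma G_ge0 y : 0 <= G y.
Proof. exact: fine_ge0P. Qed.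
Lemma pV_ge0 a b : 0 <= pV a b.
Proof. exact: fine_ge0P. Qed.

Lemma pV0T : pV 0 T = 1.
Proof.
rewrite /pV V_unif; last exact: measurable_itv.
rewrite setIid lebesgue_measure_itv /= lte_fin hT /=.
by rewrite subr0 mulVf // gt_eqF.
Qed.

Lemma f_Phi x : 1 - fine (P [set w | expR (- r * V w) * sigma1 w <= x]) = Phi x 0 T.
Proof.
set S := [set w | expR (- r * V w) * sigma1 w <= x].
have ES : E x = ~` S.
  apply/seteqP; split => w /=; rewrite /E /S /setC /=.
    by move=> h1 h2; move: h1; rewrite ltNge h2.
  by move=> h; rewrite ltNge; apply/negP.
have mS' : measurable S by rewrite -(setCK S) -ES; apply: measurableC; exact: mE.
have hnull : P (V @^-1` ~` `]0, T]) = 0%E.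
  rewrite V_unif; last by apply: measurableC; exact: measurable_itv.
  by rewrite setICl measure0 mule0.
have mVc : measurable (V @^-1` ~` `]0, T]).
  by have := mV measurableT _ (measurableC (measurable_itv `]0, T])); rewrite setTI.
have h1 : P (E x) = P (E x `&` V @^-1` `]0, T]).
  apply/eqP; rewrite eq_le; apply/andP; split; last first.
    apply: le_measure; rewrite ?inE; [exact: mEV|exact: mE|exact: subIsetl].
  have sub : E x `<=` (E x `&` V @^-1` `]0, T]) `|` V @^-1` ~` `]0, T].
    move=> w hw /=; case: (pselect ((V @^-1` `]0, T]) w)) => h; [left|right] => //.
  apply: le_trans (le_measure P _ _ sub) _; rewrite ?inE.
  - exact: mE.
  - by apply: measurableU; [exact: mEV|exact: mVc].
  set A := E x `&` V @^-1` `]0, T]; set B := V @^-1` ~` `]0, T].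
  have hU : (P (A `|` B) <= P A + P B)%E :=
     measureU2 P (mEV x 0 T) mVc.
  by rewrite hnull adde0 in hU.
have h2 : P (E x) = (1 - P S)%E by rewrite ES probability_setC.
rewrite /Phi -h1 h2 (Pfin _ mS') -EFinB //.
Qed.

Variables (alpha : R) (L : R -> R).
Hypotheses (halpha : 0 < alpha) (Lslow : slowly_varying L)
  (sigma_tail : forall x : R, 0 < x ->
     P [set w | sigma1 w > x] = (L x / x `^ alpha)%:E).

Lemma G_eq y : 0 < y -> G y = L y / y `^ alpha.
Proof. by move=> y0; rewrite /G sigma_tail. Qed.

Lemma G_pos : \forall y \near +oo, 0 < G y.
Proof.
have L0 := Lslow.1.
have y0 := nbhs_pinfty_gt (num_real (0 : R)).
near=> y.
have hy : 0 < y by near: y; exact: y0.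
have hL : 0 < L y by near: y; exact: L0.
rewrite G_eq //; apply: divr_gt0 => //; exact: powR_gt0.
Unshelve. all: by end_near.
Qed.

Lemma G_ratio s : 0 < s -> (fun y => G (s * y) / G y) @ +oo --> s `^ (- alpha).
Proof.
move=> s0.
have H : (fun y => s `^ (- alpha) * (L (s * y) / L y)) @ +oo --> s `^ (- alpha) * 1.
  by apply: cvgMr; exact: Lslow.2.
rewrite mulr1 in H.
apply: cvg_trans H; apply: near_eq_cvg.
have L0 := Lslow.1.
have y0 := nbhs_pinfty_gt (num_real (0 : R)).
near=> y.
have hy : 0 < y by near: y; exact: y0.
have hL : 0 < L y by near: y; exact: L0.
have hsy : 0 < s * y by exact: mulr_gt0.
rewrite /= G_eq // G_eq // powRM ?ltW // powRN.
have h1 : 0 < s `^ alpha by exact: powR_gt0.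
have h2 : 0 < y `^ alpha by exact: powR_gt0.
field; apply/and3P; split; rewrite gt_eqF //.
Unshelve. all: by end_near.
Qed.

Lemma Bmain (t eta : R) : 0 < t -> 1 < eta ->
  \forall x \near +oo,
    Phi (t * x) 0 T <= eta * eta * eta * t `^ (- alpha) * Phi x 0 T /\
    t `^ (- alpha) * Phi x 0 T <= eta * eta * eta * Phi (t * x) 0 T.
Proof.
move=> t0 e1.
set tau := t `^ (- alpha).
have tau0 : 0 < tau by exact: powR_gt0.
have le0 : 0 < ln eta by exact: ln_gt0.
have q0 : 0 <= alpha * r * T / ln eta.
  by apply: divr_ge0; [apply: mulr_ge0; [apply: mulr_ge0|]|]; exact: ltW.
have hn := archi_boundP q0.
set n := Num.Def.archi_bound _ in hn.
have n0 : 0 < n%:R :> R by lra.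
set h := T / n%:R.
have h0 : 0 < h by exact: divr_gt0.
have nh : n%:R * h = T by rewrite /h mulrC divfK // gt_eqF.
set c := expR (r * h).
have c0 : 0 < c by exact: expR_gt0.
have c1 : 1 <= c by rewrite /c -expR0 ler_expR; apply: mulr_ge0; exact: ltW.
set gam := c `^ alpha.
have gam0 : 0 < gam by exact: powR_gt0.
have gle : gam <= eta.
  rewrite /gam /c -expRM.
  apply: le_trans (_ : _ <= expR (ln eta)) _; last by rewrite lnK // posrE; lra.
  rewrite ler_expR.
  have -> : r * h * alpha = (alpha * r * T) / n%:R by rewrite /h; field; rewrite gt_eqF.
  rewrite ler_pdivrMr //.
  move: hn; rewrite ltr_pdivrMr // => hn; lra.
have HAt := @ratio_bounds R G t tau eta tau0 e1 G_pos (G_ratio _ t0).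
have HAc := @ratio_bounds R G c _ eta (powR_gt0 (- alpha) c0) e1 G_pos (G_ratio _ c0).
have Hall : \forall y \near +oo,
   (G (t * y) <= eta * tau * G y /\ tau * G y <= eta * G (t * y)) /\
   (G (c * y) <= eta * c `^ (- alpha) * G y /\ c `^ (- alpha) * G y <= eta * G (c * y)).
  near=> y; split; [near: y; exact: HAt| near: y; exact: HAc].
case: Hall => M [Mr HM].
exists (Num.max M 0); split; first exact: num_real.
move=> x; rewrite gt_max => /andP[xM x0].
have key : forall k : nat,
    Phi (t * x) 0 (k%:R * h) <= eta * eta * eta * tau * Phi x 0 (k%:R * h) /\
    tau * Phi x 0 (k%:R * h) <= eta * eta * eta * Phi (t * x) 0 (k%:R * h).
  elim=> [|k [IH1 IH2]].
    rewrite mul0r.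
    have z y : Phi y 0 0 = 0.
      by have := Phi_add y 0 0 0 (lexx 0) (lexx 0); lra.
    by rewrite !z !mulr0.
  set a := k%:R * h.
  have a0 : 0 <= a by apply: mulr_ge0; [exact: ler0n| exact: ltW].
  have -> : k.+1%:R * h = a + h by rewrite -natr1 mulrDl mul1r.
  have ah : a <= a + h by lra.
  rewrite (Phi_add (t * x) 0 a (a + h) a0 ah) (Phi_add x 0 a (a + h) a0 ah).
  set y := x * expR (r * a).
  have Ea : 1 <= expR (r * a) by rewrite -expR0 ler_expR; apply: mulr_ge0 => //; exact: ltW.
  have yx : x <= y by rewrite /y ler_peMr //; exact: ltW.
  have cyy : y <= c * y by rewrite ler_peMl //; lra.
  have eA : expR (r * (a + h)) = expR (r * a) * c by rewrite mulrDr expRD.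
  have tx0 : 0 < t * x by exact: mulr_gt0.
  have u1 := piece_up (t * x) a (a + h) a0.
  have u2 := piece_lo (t * x) a (a + h) tx0.
  have u3 := piece_up x a (a + h) a0.
  have u4 := piece_lo x a (a + h) x0.
  rewrite -mulrA -/y in u1.
  rewrite eA (_ : t * x * (expR (r * a) * c) = t * (c * y)) in u2; last by rewrite /y; ring.
  rewrite eA (_ : x * (expR (r * a) * c) = c * y) in u4; last by rewrite /y; ring.
  have [[g1 _] _] := HM y ltac:(lra).
  have [[_ g2] _] := HM (c * y) ltac:(lra).
  have [_ [_ g3]] := HM y ltac:(lra).
  have g3' : G y <= eta * gam * G (c * y).
    rewrite powRN -/gam in g3.
    have -> : G y = gam * (gam^-1 * G y) by rewrite mulrA divff ?mul1r // gt_eqF.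
    have := ler_wpM2l (ltW gam0) g3; lra.
  have [p1 p2] := @piece_real R _ _ _ _ _ _ _ _ _ _ (pV_ge0 a (a + h)) (G_ge0 y) (G_ge0 (c * y)) (G_ge0 (t * y))
    (G_ge0 (t * (c * y))) (Phi_ge0 x a (a + h)) (Phi_ge0 (t * x) a (a + h)) tau0 gam0 gle e1
    u1 u2 u3 u4 g1 g2 g3'.
  split; lra.
by have := key n; rewrite nh.
Unshelve. all: by end_near.
Qed.

Lemma f_pos : \forall x \near +oo, 0 < Phi x 0 T.
Proof.
case: G_pos => M [Mr HM].
exists (Num.max M 0); split; first exact: num_real.
move=> x; rewrite gt_max => /andP[xM x0].
have ET : 1 <= expR (r * T) by rewrite -expR0 ler_expR; apply: mulr_ge0; exact: ltW.
have yx : x <= x * expR (r * T) by rewrite ler_peMr //; exact: ltW.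
have := piece_lo x 0 T x0; rewrite pV0T mulr1 => h.
apply: lt_le_trans h; apply: HM; lra.
Qed.

Lemma final_cvg t : 0 < t -> (fun x => Phi (t * x) 0 T / Phi x 0 T) @ +oo --> t `^ (- alpha).
Proof.
move=> t0; apply/cvgrPdist_le => eps e0.
set tau := t `^ (- alpha).
have tau0 : 0 < tau by exact: powR_gt0.
set w := Num.min 1 (eps / tau).
have w0 : 0 < w by rewrite lt_min ltr01 /=; exact: divr_gt0.
have w1 : w <= 1 by rewrite ge_min lexx.
have wt : w * tau <= eps.
  have : w <= eps / tau by rewrite ge_min lexx orbT.
  by rewrite -ler_pdivlMr.
set u := w / 7.
have u0 : 0 < u by rewrite /u; lra.
have u1 : u <= 1 by rewrite /u; lra.
have e1 : 1 < 1 + u by lra.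
have uu : u * u <= u by rewrite ler_piMl //; lra.
have uuu : u * u * u <= u by rewrite ler_piMl //; [apply: mulr_ge0; lra | lra].
have E3 : (1 + u) * (1 + u) * (1 + u) <= 1 + w by rewrite /u in uu uuu *; nra.
have HB := Bmain t (1 + u) t0 e1.
near=> x.
have px : 0 < Phi x 0 T by near: x; exact: f_pos.
have [h1 h2] : Phi (t * x) 0 T <= (1 + u) * (1 + u) * (1 + u) * tau * Phi x 0 T /\
    tau * Phi x 0 T <= (1 + u) * (1 + u) * (1 + u) * Phi (t * x) 0 T by near: x; exact: HB.
set q := Phi (t * x) 0 T / Phi x 0 T.
have eq : Phi (t * x) 0 T = q * Phi x 0 T by rewrite /q divfK // gt_eqF.
rewrite eq in h1 h2.
set K := (1 + u) * (1 + u) * (1 + u) in h1 h2 E3.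
have q0 : 0 <= q by rewrite /q divr_ge0 // ?Phi_ge0.
have hq1 : q <= K * tau by rewrite -(ler_pM2r px).
have hq2 : tau <= K * q by rewrite -(ler_pM2r px) -mulrA.
have a1 : K * tau <= (1 + w) * tau by rewrite ler_pM2r.
have a2 : K * q <= (1 + w) * q by apply: ler_wpM2r.
rewrite ler_norml; apply/andP; split; first lra.
case: (leP q tau) => hqt; last lra.
have : w * q <= w * tau by apply: ler_wpM2l => //; lra.
lra.
Unshelve. all: by end_near.
Qed.

Lemma final_result :
  has_regularly_varying_tail
    (fun x : R => fine (P [set w | expR (- r * V w) * sigma1 w <= x])).
Proof.
exists (- alpha).
have ef : (fun x => 1 - fine (P [set w | expR (- r * V w) * sigma1 w <= x])) =
    fun x => Phi x 0 T by apply: funext => x; exact: f_Phi.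
rewrite ef; split; first exact: f_pos.
move=> t t0; exact: final_cvg.
Qed.

End S.

Theorem lemma3p2 (R : realType) (d : measure_display) (Omega : measurableType d)
  (P : probability Omega R) (r T alpha : R) (L : R -> R)
  (sigma1 V : Omega -> R)
  (hr : 0 < r) (hT : 0 < T) (halpha : 0 < alpha)
  (msigma : measurable_fun setT sigma1) (mV : measurable_fun setT V)
  (sigma_nonneg : forall w, 0 <= sigma1 w)
  (Lcont : {in `]0, +oo[, continuous L})
  (Lslow : slowly_varying L)
  (Linfty : L x @[x --> +oo] --> +oo)
  (sigma_tail : forall x : R, 0 < x ->
     P [set w | sigma1 w > x] = (L x / x `^ alpha)%:E)
  (V_unif : forall A : set R, measurable A ->
     P (V @^-1` A) =
       mule (T^-1)%:E (lebesgue_measure (A `&` `]0, T])))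
  (indep : forall A B : set R, measurable A -> measurable B ->
     P (sigma1 @^-1` A `&` V @^-1` B) =
       (P (sigma1 @^-1` A) * P (V @^-1` B))%E) :
  has_regularly_varying_tail
    (fun x : R => fine (P [set w | expR (- r * V w) * sigma1 w <= x])).
Proof.
exact: (@final_result R d Omega P r T sigma1 V hr hT msigma mV sigma_nonneg V_unif indep alpha L halpha Lslow sigma_tail).
Qed.
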